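(* Let $n,s\in\mathbb{N}$, $\varepsilon\in(0,1)$, and suppose $m:=\frac{\varepsilon n}{2s}$ is an integer with $m\ge 3$; put $L:=n/m=\frac{2s}{\varepsilon}$ (an integer). Define $b_0=1$ and $b_k=km-1$ for $k=1,\dots,L$, and $$B=\{1,2\}\cup\{b_k,\,b_k+1 : k=1,\dots,L\}\subseteq[n].$$ Define intervals $I_0=\{2,3,\dots,b_1\}$ and $I_k=\{b_k+1,\dots,b_{k+1}\}$ for $1\le k\le L-1$ (these partition $\{2,\dots,n-1\}$). For $x\in I_k$ ($0\le k\le L-1$) let $P(x)=\{b_k,\,b_k+1,\,x,\,b_{k+1},\,b_{k+1}+1\}$. Let $f:[n]\to\mathbb{R}$ have at most $s$ distinct discrete derivatives, and assume (i) $f$ is $\varepsilon$-far from convex, and (ii) there is a convex $h:B\to\mathbb{R}$ with $|\{y\in B: h(y)\ne f(y)\}|\le \frac{\varepsilon}{32}|B|$. Then $$\bigl|\{x\in\{2,\dots,n-1\} : f|_{P(x)} \text{ is not convex}\}\bigr|\ \ge\ \frac{\varepsilon n}{32}.$$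
   Context: For $f:[n]\to\mathbb{R}$, the discrete derivative at $i\in[n-1]$ is $\Delta_f(i)=f(i+1)-f(i)$; the number of distinct discrete derivatives of $f$ is $|\{\Delta_f(i): i\in[n-1]\}|$. For a finite set $S\subseteq\mathbb{R}$, a function $g:S\to\mathbb{R}$ is convex if $\frac{g(y)-g(x)}{y-x}\le\frac{g(z)-g(y)}{z-y}$ for all $x<y<z$ in $S$. $f$ is $\varepsilon$-far from convex if every convex $g:[n]\to\mathbb{R}$ differs from $f$ on at least $\varepsilon n$ points of $[n]$. *)

(* Defs.v *)
From HB Require Import structures.
From mathcomp Require Import all_boot all_order all_algebra.
From mathcomp Require Import reals.
Set Implicit Arguments. Unset Strict Implicit. Unset Printing Implicit Defensive.
Import Order.TTheory GRing.Theory Num.Theory.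
Local Open Scope ring_scope.

(* Functions [n] -> R are modelled as g : nat -> R; only values on the
   relevant finite domain matter.  A finite domain S ⊆ N (⊆ R) is a seq nat. *)

Definition convex_on {R : realFieldType} (S : seq nat) (g : nat -> R) : bool :=
  all (fun x => all (fun y => all (fun z =>
     ((x < y)%N && (y < z)%N) ==>
     ((g y - g x) / (y%:R - x%:R) <= (g z - g y) / (z%:R - y%:R))) S) S) S.

Definition dom (n : nat) : seq nat := iota 1 n.

Definition num_derivs {R : realFieldType} (n : nat) (f : nat -> R) : nat :=
  size (undup [seq f i.+1 - f i | i <- iota 1 n.-1]).

Definition eps_far {R : realFieldType} (eps : R) (n : nat) (f : nat -> R) : Prop :=
  forall g : nat -> R, convex_on (dom n) g ->
    eps * n%:R <= (count (fun x => g x != f x) (dom n))%:R.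

Definition bpt (m k : nat) : nat := if k == 0%N then 1%N else (k * m).-1.

Definition Bset (m L : nat) : seq nat :=
  undup ([:: 1%N; 2%N] ++ flatten [seq [:: bpt m k; (bpt m k).+1] | k <- iota 1 L]).

Definition Pset (m k x : nat) : seq nat :=
  [:: bpt m k; (bpt m k).+1; x; bpt m k.+1; (bpt m k.+1).+1].

Definition bad_point {R : realFieldType} (m L : nat) (f : nat -> R) (x : nat) : bool :=
  has (fun k => ((bpt m k < x)%N && (x <= bpt m k.+1)%N) && ~~ convex_on (Pset m k x) f)
      (iota 0 L).

(* Main.v *)
Require Import Defs.
From HB Require Import structures.
From mathcomp Require Import all_boot all_order all_algebra.
From mathcomp Require Import reals.
From mathcomp Require Import ring lra zify.
Import Order.TTheory GRing.Theory Num.Theory.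
Local Open Scope ring_scope.
Set Implicit Arguments. Unset Strict Implicit.


Lemma slope_iff {R : realFieldType} (u v a c : R) : 0 < a -> 0 < c ->
  (u / a <= v / c) = (u * c <= v * a).
Proof.
move=> ha hc; rewrite ler_pdivlMr // mulrAC ler_pdivrMr //.
Qed.

Lemma natgt {R : realFieldType} (x y : nat) : (x < y)%N -> 0 < (y%:R - x%:R : R).
Proof. by move=> h; rewrite subr_gt0 ltr_nat. Qed.

Lemma convex_triple {R : realFieldType} (S : seq nat) (g : nat -> R) x y z :
  convex_on S g -> x \in S -> y \in S -> z \in S -> (x < y)%N -> (y < z)%N ->
  (g y - g x) * (z%:R - y%:R) <= (g z - g y) * (y%:R - x%:R).
Proof.
move=> /allP /(_ x) H hx hy hz hxy hyz.
move: (H hx) => /allP /(_ y hy) /allP /(_ z hz); rewrite hxy hyz /=.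
by rewrite slope_iff // natgt.
Qed.

Lemma convex_intro {R : realFieldType} (S : seq nat) (g : nat -> R) :
  (forall x y z, (x < y)%N -> (y < z)%N ->
    (g y - g x) * (z%:R - y%:R) <= (g z - g y) * (y%:R - x%:R)) ->
  convex_on S g.
Proof.
move=> H; apply/allP => x _; apply/allP => y _; apply/allP => z _.
apply/implyP => /andP [hxy hyz]; rewrite slope_iff ?natgt //; exact: H.
Qed.

Lemma natS {R : realFieldType} (p : nat) : (p.+1%:R : R) = p%:R + 1.
Proof. by rewrite natr1. Qed.

Lemma convT {R : realFieldType} (S : seq nat) (g : nat -> R) p r :
  convex_on S g -> p \in S -> p.+1 \in S -> r \in S -> (p.+1 <= r)%N ->
  g p.+1 + (g p.+1 - g p) * (r%:R - p.+1%:R) <= g r.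
Proof.
move=> hc hp hp1 hr; rewrite leq_eqVlt => /orP [/eqP <-|hlt].
  by rewrite subrr mulr0 addr0.
have := convex_triple hc hp hp1 hr (ltnSn p) hlt.
rewrite natS; lra.
Qed.

Lemma convT' {R : realFieldType} (S : seq nat) (g : nat -> R) p r :
  convex_on S g -> p \in S -> r \in S -> r.+1 \in S -> (p <= r)%N ->
  g r - (g r.+1 - g r) * (r%:R - p%:R) <= g p.
Proof.
move=> hc hp hr hr1; rewrite leq_eqVlt => /orP [/eqP <-|hlt].
  by rewrite subrr mulr0 subr0.
have := convex_triple hc hp hr hr1 hlt (ltnSn r).
rewrite natS; lra.
Qed.

Lemma convM {R : realFieldType} (S : seq nat) (g : nat -> R) p r :
  convex_on S g -> p \in S -> p.+1 \in S -> r \in S -> r.+1 \in S -> (p < r)%N ->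
  g p.+1 - g p <= g r.+1 - g r.
Proof.
move=> hc hp hp1 hr hr1 hlt.
case: (ltngtP p.+1 r) => [h2||h2]; last first.
- subst r. have := convex_triple hc hp hp1 hr1 (ltnSn p) (ltnSn p.+1).
  rewrite !natS; lra.
- by rewrite ltnNge hlt.
have h1 := convT hc hp hp1 hr (ltnW h2).
have h3 := convT' hc hp1 hr hr1 (ltnW h2).
have hd : 0 < (r%:R - p.+1%:R : R) by apply: natgt.
set a := g p.+1 - g p in h1 h3 *; set b := g r.+1 - g r in h1 h3 *.
have : (a - b) * (r%:R - p.+1%:R) <= 0 by lra.
rewrite pmulr_lle0 //; lra.
Qed.


Lemma bptE m j : bpt m j = if j == 0%N then 1%N else (j * m - 1)%N.
Proof. by rewrite /bpt subn1. Qed.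

Lemma bpt_pos m j : (3 <= m)%N -> (1 <= bpt m j)%N.
Proof. rewrite bptE; case: eqP => ? //; nia. Qed.

Lemma bpt_lt m j j' : (3 <= m)%N -> (j < j')%N -> ((bpt m j).+1 <= bpt m j')%N.
Proof. rewrite !bptE; case: eqP => ?; case: eqP => ?; nia. Qed.

Lemma bpt_le m j j' : (3 <= m)%N -> (j <= j')%N -> (bpt m j <= bpt m j')%N.
Proof. move=> hm; rewrite leq_eqVlt => /orP [/eqP -> //| h].
by have := bpt_lt hm h; lia. Qed.

Lemma bpt_inj m : (3 <= m)%N -> injective (bpt m).
Proof. move=> hm j j' e; case: (ltngtP j j') => // h.
- by have := bpt_lt hm h; rewrite e; lia.
- by have := bpt_lt hm h; rewrite e; lia.
Qed.

Lemma bpt_S_inj m : (3 <= m)%N -> injective (fun j => (bpt m j).+1).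
Proof. by move=> hm j j' [] /(bpt_inj hm). Qed.

Lemma bpt_top m L j : (3 <= m)%N -> (0 < L)%N -> (j <= L)%N -> ((bpt m j).+1 <= L * m)%N.
Proof. rewrite bptE; case: eqP => ?; nia. Qed.

Lemma mem_bpt m L j : (j <= L)%N -> (bpt m j \in Bset m L) && ((bpt m j).+1 \in Bset m L).
Proof.
move=> hj; rewrite /Bset !mem_undup !mem_cat.
case: (posnP j) => [->|hj0]; first by rewrite /bpt /=.
apply/andP; split; apply/orP; right; apply/flatten_mapP; exists j;
  rewrite ?mem_iota ?inE ?eqxx ?orbT //; lia.
Qed.


Definition sig {R : realFieldType} (h : nat -> R) m j := h (bpt m j).+1 - h (bpt m j).
Definition ell {R : realFieldType} (h : nat -> R) m j (x : nat) :=
  h (bpt m j) + sig h m j * (x%:R - (bpt m j)%:R).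

Lemma sig_mono {R : realFieldType} (h : nat -> R) m L j j' :
  (3 <= m)%N -> convex_on (Bset m L) h -> (j <= j')%N -> (j' <= L)%N ->
  sig h m j <= sig h m j'.
Proof.
move=> hm hc; rewrite leq_eqVlt => /orP [/eqP -> //| hjj'] hj'.
case/andP: (mem_bpt m (leq_trans (ltnW hjj') hj')) => h1 h2.
case/andP: (mem_bpt m hj') => h3 h4.
apply: (convM hc h1 h2 h3 h4); have := bpt_lt hm hjj'; lia.
Qed.

Lemma F2 {R : realFieldType} (h : nat -> R) m L j k x :
  (3 <= m)%N -> convex_on (Bset m L) h -> (j <= k)%N -> (k <= L)%N ->
  (bpt m k <= x)%N -> ell h m j x <= ell h m k x.
Proof.
move=> hm hc hjk hk hx; rewrite /ell.
have hs := sig_mono hm hc hjk hk.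
have hx' : 0 <= (x%:R - (bpt m k)%:R : R) by rewrite subr_ge0 ler_nat.
have H1 : sig h m j * (x%:R - (bpt m k)%:R) <= sig h m k * (x%:R - (bpt m k)%:R)
  by apply: ler_wpM2r.
have H2 : h (bpt m j) + sig h m j * ((bpt m k)%:R - (bpt m j)%:R) <= h (bpt m k).
  move: hjk; rewrite leq_eqVlt => /orP [/eqP ->|hlt].
    by rewrite subrr mulr0 addr0.
  case/andP: (mem_bpt m (leq_trans (ltnW hlt) hk)) => h1 h2.
  case/andP: (mem_bpt m hk) => h3 h4.
  have := convT hc h1 h2 h3 (bpt_lt hm hlt).
  rewrite /sig natS; lra.
lra.
Qed.

Lemma F3 {R : realFieldType} (h : nat -> R) m L j k x :
  (3 <= m)%N -> convex_on (Bset m L) h -> (k <= j)%N -> (j <= L)%N ->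
  (x <= (bpt m k).+1)%N -> ell h m j x <= ell h m k x.
Proof.
move=> hm hc hkj hj hx; rewrite /ell.
have hs := sig_mono hm hc hkj hj.
have hx' : (x%:R - (bpt m k).+1%:R : R) <= 0 by rewrite subr_le0 ler_nat.
have H1 : sig h m j * (x%:R - (bpt m k).+1%:R) <= sig h m k * (x%:R - (bpt m k).+1%:R)
  by apply: ler_wnM2r.
have H2 : h (bpt m j) - sig h m j * ((bpt m j)%:R - (bpt m k).+1%:R) <= h (bpt m k).+1.
  move: hkj; rewrite leq_eqVlt => /orP [/eqP ->|hlt].
    rewrite /sig natS; lra.
  case/andP: (mem_bpt m (leq_trans (ltnW hlt) hj)) => h1 h2.
  case/andP: (mem_bpt m hj) => h3 h4.
  exact: (convT' hc h2 h3 h4 (bpt_lt hm hlt)).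
move: H1 H2; rewrite /sig !natS; lra.
Qed.


Definition gmax {R : realFieldType} (h : nat -> R) m L (x : nat) : R :=
  foldr (fun j acc => Num.max (ell h m j x) acc) (ell h m 0 x) (iota 0 L.+1).

Lemma foldmax_ge {R : realFieldType} (F : nat -> R) d s j :
  j \in s -> F j <= foldr (fun j acc => Num.max (F j) acc) d s.
Proof.
elim: s => //= a s IH; rewrite inE => /orP [/eqP ->|hj].
  by rewrite le_max lexx.
by rewrite le_max IH ?orbT.
Qed.

Lemma foldmax_le {R : realFieldType} (F : nat -> R) d s y :
  d <= y -> (forall j, j \in s -> F j <= y) ->
  foldr (fun j acc => Num.max (F j) acc) d s <= y.
Proof.
move=> hd; elim: s => //= a s IH H.
rewrite ge_max H ?inE ?eqxx //= IH // => j hj; apply: H; by rewrite inE hj orbT.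
Qed.

Lemma G2 {R : realFieldType} (h : nat -> R) m L j x :
  (j <= L)%N -> ell h m j x <= gmax h m L x.
Proof. by move=> hj; rewrite /gmax; apply: (foldmax_ge (fun j => ell h m j x)); rewrite mem_iota; lia. Qed.

Lemma G3 {R : realFieldType} (h : nat -> R) m L x y :
  (forall j, (j <= L)%N -> ell h m j x <= y) -> gmax h m L x <= y.
Proof.
move=> H; rewrite /gmax; apply: (@foldmax_le R (fun j => ell h m j x) _ _ y); first exact: H.
by move=> j; rewrite mem_iota => hj; apply: H; lia.
Qed.

Lemma G1 {R : realFieldType} (h : nat -> R) m L S : convex_on S (gmax h m L).
Proof.
apply: convex_intro => x y z hxy hyz.
have a0 : 0 < (y%:R - x%:R : R) by apply: natgt.
have b0 : 0 < (z%:R - y%:R : R) by apply: natgt.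
set a := (y%:R - x%:R : R) in a0 *; set b := (z%:R - y%:R : R) in b0 *.
have c0 : 0 < a + b by lra.
suff : gmax h m L y <= (b * gmax h m L x + a * gmax h m L z) / (a + b).
  rewrite ler_pdivlMr //; lra.
apply: G3 => j hj; rewrite ler_pdivlMr //.
have e : ell h m j y * (a + b) = b * ell h m j x + a * ell h m j z.
  by rewrite /ell /a /b; ring.
rewrite e; apply: lerD; apply: ler_wpM2l; try lra; exact: G2.
Qed.


Lemma aux_eq {R : realFieldType} (s A Bq v w : R) :
  0 < A -> 0 < Bq -> s * A <= v -> w <= s * Bq -> v * Bq <= w * A -> v = s * A.
Proof.
move=> hA hB h1 h2 h3.
have h4 : A * (w - s * Bq) <= 0 by rewrite pmulr_rle0 //; lra.
have h5 : (v - s * A) * Bq <= 0 by lra.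
move: h5; rewrite pmulr_lle0 // => h5; lra.
Qed.

Lemma fine_eq {R : realFieldType} (h f : nat -> R) m L k x :
  (3 <= m)%N -> convex_on (Bset m L) h -> (k < L)%N ->
  f (bpt m k) = h (bpt m k) -> f (bpt m k).+1 = h (bpt m k).+1 ->
  f (bpt m k.+1) = h (bpt m k.+1) -> f (bpt m k.+1).+1 = h (bpt m k.+1).+1 ->
  sig h m k = sig h m k.+1 ->
  (bpt m k < x)%N -> (x <= bpt m k.+1)%N -> convex_on (Pset m k x) f ->
  gmax h m L x = f x.
Proof.
move=> hm hc hk e1 e2 e3 e4 hfl hx1 hx2 hP.
set b0 := bpt m k in e1 e2 hx1 hP *; set b1 := bpt m k.+1 in e3 e4 hx2 hP *.
have hb : (b0.+1 <= b1)%N by apply: bpt_lt.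
have HH : exists i, [/\ (k <= i <= k.+1)%N, f x = ell h m i x,
     ell h m k x <= f x & ell h m k.+1 x <= f x].
  have ellk : ell h m k b0.+1 = h b0.+1 by rewrite /ell /sig -/b0 natS; ring.
  have ellk1 : ell h m k.+1 b1 = h b1 by rewrite /ell -/b1 subrr mulr0 addr0.
  have m0 : b0 \in Pset m k x by rewrite /Pset -/b0 -/b1 !inE eqxx.
  have m1 : b0.+1 \in Pset m k x by rewrite /Pset -/b0 -/b1 !inE eqxx ?orbT.
  have mx : x \in Pset m k x by rewrite /Pset -/b0 -/b1 !inE eqxx ?orbT.
  have m2 : b1 \in Pset m k x by rewrite /Pset -/b0 -/b1 !inE eqxx ?orbT.
  have m3 : b1.+1 \in Pset m k x by rewrite /Pset -/b0 -/b1 !inE eqxx ?orbT.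
  case: (ltngtP x b0.+1) => hxa.
  - lia.
  - case: (ltngtP x b1) => hxb.
    +
      have T1 := convex_triple hP m0 m1
        mx (ltnSn _) hxa.
      have T2 := convex_triple hP mx m2
        m3 hxb (ltnSn _).
      have T3 := convex_triple hP m1 mx
        m2 hxa hxb.
      rewrite e1 e2 e3 e4 in T1 T2 T3.
      have A0 : 0 < (x%:R - b0.+1%:R : R) by apply: natgt.
      have B0 : 0 < (b1%:R - x%:R : R) by apply: natgt.
      rewrite !natS in T1 T2 T3 A0.
      have hs : sig h m k = h b0.+1 - h b0 by [].
      have hs1 : sig h m k.+1 = h b1.+1 - h b1 by [].
      exists k; split; first by rewrite leqnn leqnSn.
      * rewrite /ell -/b0 hs.
        have hsig : h b1.+1 - h b1 = h b0.+1 - h b0 by rewrite -hs -hs1 hfl.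
        rewrite hsig in T2.
        have e1' : (b0%:R + 1 - b0%:R : R) = 1 by ring.
        have e2' : (b1%:R + 1 - b1%:R : R) = 1 by ring.
        rewrite e1' e2' !mulr1 in T1 T2.
        have := aux_eq A0 B0 T1 T2 T3.
        clear -R; move=> H; lra.
      * rewrite /ell -/b0 hs; lra.
      * rewrite /ell -/b1 hs1; lra.
    + lia.
    + exists k.+1; split; first by rewrite leqnSn leqnn.
      * by rewrite hxb e3 ellk1.
      * rewrite hxb e3 -ellk1; apply: (F2 hm hc (leqnSn k) hk); rewrite -/b1 //.
      * by rewrite hxb e3 ellk1.
  - exists k; split; first by rewrite leqnn leqnSn.
    + by rewrite hxa e2 ellk.
    + by rewrite hxa e2 ellk.
    + rewrite hxa e2 -ellk; apply: (F3 hm hc (leqnSn k) hk); by [].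

case: HH => i [hi hxi hfi hfk].
apply/eqP; rewrite eq_le; apply/andP; split.
  apply: G3 => j hj; case: (leqP j k) => hjk.
    apply: le_trans hfi; apply: (F2 hm hc hjk (ltnW hk)); lia.
  apply: le_trans hfk; apply: (F3 hm hc hjk hj); rewrite -/b1; lia.
rewrite hxi; apply: G2; lia.
Qed.


Lemma count_uniq_sub (T : eqType) (p : pred T) (s1 s2 : seq T) :
  uniq s1 -> {subset s1 <= s2} -> (count p s1 <= count p s2)%N.
Proof.
move=> hu hs; rewrite -!size_filter; apply: uniq_leq_size.
  exact: filter_uniq.
by move=> x; rewrite !mem_filter => /andP [-> /hs].
Qed.

Lemma count_or_le (T : Type) (a b : pred T) s :
  (count (fun x => a x || b x) s <= count a s + count b s)%N.
Proof. by rewrite -(count_predUI a b); apply: leq_addr. Qed.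

Lemma count_flat_le (T : Type) (I : nat -> seq T) (p q : pred T) (a : pred nat) c s :
  (forall k, k \in s -> count p (I k) <= count q (I k) + (~~ a k) * c)%N ->
  (count p (flatten (map I s)) <= count q (flatten (map I s)) + count (predC a) s * c)%N.
Proof.
elim: s => //= k s IH H; rewrite !count_cat.
have := H k (mem_head _ _).
have := IH (fun j hj => H j ltac:(by rewrite inE hj orbT)).
case: (a k) => /=; lia.
Qed.

Lemma flat_iota m K : (3 <= m)%N ->
  flatten [seq iota (bpt m k).+1 (bpt m k.+1 - bpt m k) | k <- iota 0 K] = iota 2 (bpt m K).-1.
Proof.
move=> hm; elim: K => [|K IH]; first by rewrite /bpt.
rewrite -addn1 iotaD map_cat flatten_cat IH /= cats0 add0n addn1.
have h1 := bpt_pos K hm; have h2 := bpt_lt hm (ltnSn K).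
have -> : ((bpt m K).+1 = 2 + (bpt m K).-1)%N by lia.
rewrite -iotaD; congr iota; lia.
Qed.

Lemma final_arith {R : realFieldType} (eps S M T C : R) :
  0 < eps < 1 -> 3 <= M -> 1 <= S -> (T = 0 \/ 1 <= T) ->
  T * 32 <= 2 * eps + 4 * S -> 2 * S * M <= 2 + C + M * (4 * T + S) ->
  2 * S * M / 32 <= C.
Proof.
move=> he hM hS [-> | hT] h1 h2.
  have : 3 <= S * M by nra.
  lra.
have hS' : 15 / 2 <= S by lra.
have h3 : (4 * T) * M <= ((2 + 4 * S) / 8) * M by apply: ler_wpM2r; lra.
have h4 : 15 / 2 * M <= S * M by apply: ler_wpM2r; lra.
lra.
Qed.

Lemma count_sub_in (T : eqType) (p q : pred T) s :
  (forall x, x \in s -> p x -> q x) -> (count p s <= count q s)%N.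
Proof.
elim: s => //= x s IH H.
have := IH (fun y hy => H y ltac:(by rewrite inE hy orbT)).
case px: (p x) => /=.
  rewrite (H x (mem_head _ _) px) /=; lia.
case: (q x) => /=; lia.
Qed.

Lemma size_flat2 (a b : nat -> nat) s :
  size (flatten [seq [:: a k; b k] | k <- s]) = (2 * size s)%N.
Proof. elim: s => //= k s IH; rewrite IH; lia. Qed.

Lemma size_Bset m L : (size (Bset m L) <= 2 + 2 * L)%N.
Proof.
rewrite /Bset (leq_trans (size_undup _)) // size_cat size_flat2 size_iota //.
Qed.

Unset Implicit Arguments. Set Strict Implicit.

Theorem mainTheorem6 (R : realType) (n s m : nat) (eps : R) (f : nat -> R)
  (heps : 0 < eps < 1)
  (hm : m%:R = eps * n%:R / (2 * s%:R))
  (hm3 : (3 <= m)%N)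
  (hL : (m %| n)%N)
  (hs : (num_derivs n f <= s)%N)
  (hfar : eps_far eps n f)
  (hB : exists h : nat -> R, convex_on (Bset m (n %/ m)) h /\
          (count (fun y => h y != f y) (Bset m (n %/ m)))%:R
            <= eps / 32 * (size (Bset m (n %/ m)))%:R) :
  eps * n%:R / 32 <= (count (bad_point m (n %/ m) f) (iota 2 (n - 2)))%:R.
Proof.
case: hB => h [hc ht].
set L := (n %/ m)%N in hc ht *.
have hn : n = (L * m)%N by rewrite /L divnK.
have s0 : (0 < s)%N.
  case: (posnP s) => // s0; move: hm; rewrite s0 mulr0 invr0 mulr0.
  by move/eqP; rewrite pnatr_eq0; lia.
have hsR : 0 < (s%:R : R) by rewrite ltr0n.
have hepsn : eps * n%:R = 2 * s%:R * m%:R.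
  rewrite hm (mulrC (2 * s%:R)) divfK //; apply: lt0r_neq0; lra.
have n0 : (0 < n)%N.
  case: (posnP n) => // n0; move: hepsn; rewrite n0 mulr0.
  have : 0 < (m%:R : R) by rewrite ltr0n; lia.
  nra.
have L0 : (0 < L)%N by move: n0; rewrite hn; nia.
set g := gmax h m L.
have hD := hfar g (G1 h m L (dom n)).
set D := count (fun x => g x != f x) (dom n) in hD.
set bad := bad_point m L f.
set C := count bad (iota 2 (n - 2)).
pose pg j := (f (bpt m j) == h (bpt m j)) && (f (bpt m j).+1 == h (bpt m j).+1).
pose fine k := [&& pg k, pg k.+1 & sig h m k == sig h m k.+1].
set t := count (fun y => h y != f y) (Bset m L) in ht.
pose NN := count (fun k => [&& pg k, pg k.+1 & sig h m k != sig h m k.+1]) (iota 0 L).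
pose PB := count (predC pg) (iota 0 L.+1).
have hNF : (count (predC fine) (iota 0 L) <= 2 * PB + NN)%N.
  have e1 : (count (predC fine) (iota 0 L) <=
     count (predC pg) (iota 0 L) + count (fun k => ~~ pg k.+1) (iota 0 L) + NN)%N.
    apply: leq_trans (leq_add (count_or_le _ _ _) (leqnn NN)).
    apply: leq_trans (count_or_le _ _ _); apply: count_sub_in => k _.
    rewrite /= /fine; case: (pg k); case: (pg k.+1) => //=.
  have e2 : (count (predC pg) (iota 0 L) <= PB)%N.
    by rewrite /PB -addn1 iotaD count_cat leq_addr.
  have e3 : (count (fun k => ~~ pg k.+1) (iota 0 L) <= PB)%N.
    rewrite /PB /= -(count_map succn (predC pg)).
    have -> : [seq k.+1 | k <- iota 0 L] = iota 1 L.
      by rewrite (iotaDl 1 0 L).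
    lia.
  lia.
have hPB : (PB <= 2 * t)%N.
  rewrite /PB.
  have e1 : (count (predC pg) (iota 0 L.+1) <=
      count (fun j => f (bpt m j) != h (bpt m j)) (iota 0 L.+1) +
      count (fun j => f (bpt m j).+1 != h (bpt m j).+1) (iota 0 L.+1))%N.
    apply: leq_trans (count_or_le _ _ _); apply: count_sub_in => j _.
    by rewrite /= /pg negb_and.
  apply: (leq_trans e1); rewrite mul2n -addnn; apply: leq_add.
  - rewrite -(count_map (bpt m) (fun y => f y != h y)).
    rewrite (eq_count (a2 := fun y => h y != f y)); last by move=> y /=; rewrite eq_sym.
    apply: count_uniq_sub; first by rewrite map_inj_uniq ?iota_uniq //; apply: bpt_inj.
    move=> y /mapP [j]; rewrite mem_iota => hj ->.
    by case/andP: (mem_bpt m (L:=L) (j:=j) ltac:(lia)).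
  - rewrite -(count_map (fun j => (bpt m j).+1) (fun y => f y != h y)).
    rewrite (eq_count (a2 := fun y => h y != f y)); last by move=> y /=; rewrite eq_sym.
    apply: count_uniq_sub; first by rewrite map_inj_uniq ?iota_uniq //; apply: bpt_S_inj.
    move=> y /mapP [j]; rewrite mem_iota => hj ->.
    by case/andP: (mem_bpt m (L:=L) (j:=j) ltac:(lia)).
have hNN : (NN <= s)%N.
  apply: leq_trans hs; rewrite /NN -size_filter /num_derivs.
  set K := filter _ (iota 0 L).
  have hK : forall k, k \in K -> [/\ (k < L)%N, pg k.+1 & sig h m k != sig h m k.+1].
    move=> k; rewrite mem_filter mem_iota => /andP [/and3P [_ h1 h2] h3].
    by split => //; lia.
  rewrite -(size_map (fun k => sig h m k.+1)); apply: uniq_leq_size.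
    rewrite map_inj_in_uniq ?filter_uniq ?iota_uniq //.
    have mono := sig_mono (L := L) hm3 hc.
    have key : forall k k', k \in K -> k' \in K -> (k < k')%N ->
        sig h m k.+1 < sig h m k'.+1.
      move=> k k' /hK [hk _ _] /hK [hk' _ hne] hlt.
      apply: le_lt_trans (mono _ _ hlt (ltnW hk')) _.
      by rewrite lt_neqAle hne mono // ltnW.
    move=> k k' hk hk' e; case: (ltngtP k k') => // hlt.
    - by have := key _ _ hk hk' hlt; rewrite e ltxx.
    - by have := key _ _ hk' hk hlt; rewrite e ltxx.
  move=> v /mapP [k /hK [hk /andP [/eqP e1 /eqP e2] _] ->].
  rewrite mem_undup /sig -e1 -e2.
  apply: (map_f (fun i => f i.+1 - f i)); rewrite mem_iota.
  have := bpt_pos k.+1 hm3; have := bpt_top hm3 L0 hk; rewrite -hn; lia.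
have hDC : (D <= 2 + C + count (predC fine) (iota 0 L) * m)%N.
  have n2 : (2 <= n)%N by rewrite hn; nia.
  have hsplit : iota 1 n = 1%N :: iota 2 (n - 2) ++ [:: n].
    have e : iota 1 n = iota 1 (1 + ((n - 2) + 1)) by congr iota; lia.
    rewrite e !iotaD /=; congr (_ :: _ ++ _).
    by rewrite subnKC.
  have hmid : iota 2 (n - 2) =
      flatten [seq iota (bpt m k).+1 (bpt m k.+1 - bpt m k) | k <- iota 0 L].
    rewrite flat_iota // bptE; case: eqP => [?|_]; first lia.
    congr iota; lia.
  rewrite /D /dom hsplit /= count_cat /= /C hmid.
  suff : (count (fun x => g x != f x)
           (flatten [seq iota (bpt m k).+1 (bpt m k.+1 - bpt m k) | k <- iota 0 L]) <=
         count bad (flatten [seq iota (bpt m k).+1 (bpt m k.+1 - bpt m k) | k <- iota 0 L])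
         + count (predC fine) (iota 0 L) * m)%N.
    case: (g 1%N != f 1%N); case: (g n != f n) => /=; lia.
  apply: count_flat_le => k; rewrite mem_iota => /andP [_ hk]; rewrite add0n in hk.
  case hf : (fine k) => /=; last first.
    rewrite mul1n; apply: leq_trans (count_size _ _) _; rewrite size_iota.
    apply: leq_trans (leq_addl _ _); rewrite !bptE; case: eqP => ?; case: eqP => ?; nia.
  rewrite mul0n addn0; apply: count_sub_in => x; rewrite mem_iota => hx.
  move=> hne; case hbx: (bad x) => //.
  suff : g x = f x by move/eqP; rewrite (negbTE hne).
  have hnb : ~~ bad x by rewrite hbx.
  have [hb1 hb2] : (bpt m k < x)%N /\ (x <= bpt m k.+1)%N.
    have := bpt_lt hm3 (ltnSn k); lia.
  move/and3P: hf => [/andP [/eqP e1 /eqP e2] /andP [/eqP e3 /eqP e4] /eqP hfl].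
  apply: (fine_eq hm3 hc hk e1 e2 e3 e4 hfl hb1 hb2).
  move/hasPn: hnb => /(_ k); rewrite mem_iota add0n hk /= hb1 hb2 /= => /(_ isT).
  by rewrite negbK.
have hsz : (size (Bset m L) <= 2 + 2 * L)%N.
  exact: size_Bset.
have hLeps : eps * L%:R = 2 * s%:R.
  have hm0 : 0 < (m%:R : R) by rewrite ltr0n; lia.
  apply: (mulIf (lt0r_neq0 hm0)) => /=; rewrite -mulrA -(natrM _ L m) -hn hepsn; ring.
rewrite hepsn.
apply: (final_arith (T := t%:R) heps); first by rewrite (ler_nat R 3 m).
- by rewrite (ler_nat R 1 s).
- by case: (posnP t) => [->|t0]; [left|right; rewrite (ler_nat R 1 t)].
- have : (size (Bset m L))%:R <= (2 + 2 * L)%:R :> R by rewrite ler_nat.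
  rewrite natrD natrM => hz.
  have : eps / 32 * (size (Bset m L))%:R <= eps / 32 * (2%:R + 2%:R * L%:R).
    by apply: ler_wpM2l => //; lra.
  lra.
- have hD' : (D%:R : R) <= (2 + C + (2 * (2 * t) + s) * m)%:R.
    rewrite ler_nat; apply: (leq_trans hDC); rewrite leq_add2l leq_mul2r; apply/orP; right.
    lia.
  move: hD'; rewrite !natrD !natrM => hD'.
  rewrite hepsn in hD; lra.
Qed.
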